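(* Let $\mathrm{SG}(n)$ denote the Sprague--Grundy value of a pile of $n$ tokens in the game $i\textsc{-Mark}(\{1\},\{2,3\})$. Let $m$ be a nonnegative integer with $m\equiv 5\pmod 6$, and suppose that $\mathrm{SG}(m-i)\neq 2$ for all integers $i$ with $0\le i\le 7$ and $i\le m$. Then $\mathrm{SG}(m)=0$.
   Context: In the impartial game $i\textsc{-Mark}(\{1\},\{2,3\})$, played on a single pile of $n\ge0$ tokens, a move replaces $n$ by $n-1$ (if $n\ge 1$), or by $n/2$ if $n>0$ is even, or by $n/3$ if $n>0$ is divisible by $3$. The Sprague--Grundy value is defined recursively by $\mathrm{SG}(n)=\mathrm{mex}\{\mathrm{SG}(w): w \text{ an option of } n\}$, where $\mathrm{mex}(T)$ is the smallest nonnegative integer not in $T$. *)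

(* Defs.v *)
From mathcomp Require Import all_boot.
Set Implicit Arguments. Unset Strict Implicit. Unset Printing Implicit Defensive.

(* mex s = smallest natural number not occurring in s
   (it is always <= size s, so searching in 0..size s suffices). *)
Definition mex (s : seq nat) : nat :=
  find (fun k => k \notin s) (iota 0 (size s).+1).

(* Options of a pile of n tokens in i-Mark({1},{2,3}):
   n-1 (if n >= 1), n/2 (if n > 0 even), n/3 (if n > 0 and 3 | n). *)
Definition options (n : nat) : seq nat :=
  if n is 0 then [::]
  else n.-1 :: ((if ~~ odd n then [:: n./2] else [::])
                ++ (if 3 %| n then [:: n %/ 3] else [::])).

(* Fuel-based SG recursion; all options of n > 0 are < n, so fuel n.+1 suffices. *)
Fixpoint sg_fuel (k n : nat) : nat :=
  match k with
  | 0 => 0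
  | k'.+1 => mex [seq sg_fuel k' w | w <- options n]
  end.

Definition SG (n : nat) : nat := sg_fuel n.+1 n.

(* Main.v *)
Require Import Defs.
From mathcomp Require Import all_boot zify.

Lemma mex_has s : has (fun k => k \notin s) (iota 0 (size s).+1).
Proof.
apply/negPn/negP=> /hasPn H.
have sub : {subset iota 0 (size s).+1 <= s}.
  by move=> x /H; rewrite negbK.
have := uniq_leq_size (iota_uniq 0 (size s).+1) sub.
by rewrite size_iota ltnn.
Qed.

Lemma mex_notin s : mex s \notin s.
Proof.
have := nth_find 0 (mex_has s).
rewrite -/(mex s) nth_iota ?add0n //.
by rewrite -[(size s).+1](size_iota 0) -has_find mex_has.
Qed.

Lemma mex_lt s j : j < mex s -> j \in s.
Proof.
move=> Hj.
have Hs : mex s < size (iota 0 (size s).+1) by rewrite -has_find mex_has.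
have := before_find 0 Hj.
rewrite nth_iota ?add0n ?negbK //.
- by move/negbFE.
- rewrite size_iota in Hs; lia.
Qed.

Lemma options_lt n w : w \in options n -> w < n.
Proof.
case: n => [|n] //=.
rewrite inE => /orP [/eqP -> //|].
rewrite mem_cat => /orP []; [case: ifP => _ //; rewrite inE => /eqP -> | case: ifP => _ //; rewrite inE => /eqP ->].
  rewrite -[uphalf n]/(n.+1./2) -divn2 ltn_divLR //; lia.
rewrite ltn_divLR //; lia.
Qed.

Lemma fuel0 k : forall n k', n < k -> n < k' -> sg_fuel k n = sg_fuel k' n.
Proof.
elim: k => [|k IH] n [|k'] //= Hn Hn'.
congr mex; apply/eq_in_map => w /options_lt Hw.
apply: IH; lia.
Qed.

Lemma fuel k n : n < k -> sg_fuel k n = SG n.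
Proof. by move=> H; rewrite /SG (@fuel0 k n n.+1 H (ltnSn n)). Qed.

Lemma SGE n : SG n = mex [seq SG w | w <- options n].
Proof.
rewrite {1}/SG /=; congr mex; apply/eq_in_map => w /options_lt Hw.
by rewrite fuel.
Qed.

Lemma SG_notin n : SG n \notin [seq SG w | w <- options n].
Proof. rewrite SGE; exact: mex_notin. Qed.

Lemma SG_lt n j : j < SG n -> j \in [seq SG w | w <- options n].
Proof. rewrite {1}SGE; exact: mex_lt. Qed.

Lemma optS n : options n.+1 = n :: ((if ~~ odd n.+1 then [:: n.+1./2] else [::])
                ++ (if 3 %| n.+1 then [:: n.+1 %/ 3] else [::])).
Proof. by []. Qed.

Lemma oddT n : n %% 2 = 1 -> odd n = true.
Proof. by rewrite modn2; case: odd. Qed.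
Lemma oddF n : n %% 2 = 0 -> odd n = false.
Proof. by rewrite modn2; case: odd. Qed.
Lemma d3T n : n %% 3 = 0 -> (3 %| n) = true.
Proof. by move=> H; apply/dvdnP; exists (n %/ 3); lia. Qed.
Lemma d3F n : n %% 3 <> 0 -> (3 %| n) = false.
Proof. by move=> H; apply/negbTE/negP => /dvdnP [q]; lia. Qed.

Ltac solve_opt n a :=
  rewrite (_ : n = (a).+1); [|lia]; rewrite optS /dvdn;
  case: eqP => ?; move: (modn2 (a).+1); case: (odd (a).+1) => /= ?; try lia;
  repeat (congr cons); rewrite -?divn2; apply/eqP; rewrite ?eqn_div //; lia.

Lemma opt1 k : options (6*k+1) = [:: 6*k].
Proof. solve_opt (6*k+1) (6*k). Qed.
Lemma opt5 k : options (6*k+5) = [:: 6*k+4].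
Proof. solve_opt (6*k+5) (6*k+4). Qed.
Lemma opt2 k : options (6*k+2) = [:: 6*k+1; 3*k+1].
Proof. solve_opt (6*k+2) (6*k+1). Qed.
Lemma opt4 k : options (6*k+4) = [:: 6*k+3; 3*k+2].
Proof. solve_opt (6*k+4) (6*k+3). Qed.
Lemma opt3 k : options (6*k+3) = [:: 6*k+2; 2*k+1].
Proof. solve_opt (6*k+3) (6*k+2). Qed.
Lemma opt0 k : options (6*k.+1) = [:: 6*k+5; 3*k.+1; 2*k.+1].
Proof. solve_opt (6*k.+1) (6*k+5). Qed.

Lemma L1 n a : options n = [:: a] ->
  SG n <> SG a /\ (0 < SG n -> SG a = 0).
Proof.
move=> H; have h1 := SG_notin n; have h2 := SG_lt n 0.
rewrite H /= !inE in h1 h2; split; first by move/eqP: h1.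
by move=> /h2 /eqP.
Qed.

Lemma L2 n a b : options n = [:: a; b] ->
  SG n <> SG a /\ SG n <> SG b /\
  (forall j, j < SG n -> j = SG a \/ j = SG b).
Proof.
move=> H; have h1 := SG_notin n; have h2 := SG_lt n.
rewrite H /= !inE negb_or in h1 h2.
case/andP: h1 => /eqP h1 /eqP h1'; do !split => //.
by move=> j /h2; rewrite !inE => /orP [] /eqP; tauto.
Qed.

Lemma L3 n a b c : options n = [:: a; b; c] ->
  SG n <> SG a /\ SG n <> SG b /\ SG n <> SG c.
Proof.
move=> H; have h1 := SG_notin n.
rewrite H /= !inE !negb_or in h1.
by case/and3P: h1 => /eqP h1 /eqP h1' /eqP h1''.
Qed.

Arguments L1 {n a}.
Arguments L2 {n a b}.
Arguments L3 {n a b c}.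

Theorem mainTheorem7 (m : nat) :
  m %% 6 = 5 ->
  (forall i : nat, i <= 7 -> i <= m -> SG (m - i) <> 2) ->
  SG m = 0.
Proof.
move=> Hm Hn.
have Em : m = 6 * (m %/ 6) + 5 by lia.
move: Hn; rewrite Em; move: (m %/ 6) => k Hn.
case: k Hn => [|k] Hn; first by [].
have h2 : SG (6 * k.+1 + 3) <> 2.
  have := Hn 2 isT; rewrite (_ : 6 * k.+1 + 5 - 2 = 6 * k.+1 + 3); last lia; apply; lia.
have h3 : SG (6 * k.+1 + 2) <> 2.
  have := Hn 3 isT; rewrite (_ : 6 * k.+1 + 5 - 3 = 6 * k.+1 + 2); last lia; apply; lia.
clear Hn Em Hm.
case: (posnP (SG (6 * k.+1 + 5))) => // Hpos.
have A1 := (L1 (opt5 k.+1)).2 Hpos.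
have [b1 [b2 _]] := L2 (opt4 k.+1).
rewrite A1 in b1 b2.
have [c1 [c2 c3]] := L2 (opt3 k.+1).
have A2 : SG (6 * k.+1 + 3) = 1.
  case: (ltnP (SG (6 * k.+1 + 3)) 3) => H; first lia.
  have := c3 0 (leq_ltn_trans (leq0n _) (leq_trans (isT : 2 < 3) H)).
  have := c3 1 (leq_ltn_trans (isT : 1 <= 2) H).
  have := c3 2 H.
  clear; move=> e2 e1 e0; lia.
have A2' : 0 = SG (6 * k.+1 + 2) \/ 0 = SG (2 * k.+1 + 1) by apply: c3; rewrite A2.
rewrite A2 in c1 c2; clear c3.
have [d1 [d2 d3]] := L2 (opt2 k.+1).
have A3 : SG (6 * k.+1 + 2) = 0.
  case: (ltnP (SG (6 * k.+1 + 2)) 3) => H; first lia.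
  have := d3 0 (leq_ltn_trans (leq0n _) (leq_trans (isT : 2 < 3) H)).
  have := d3 1 (leq_ltn_trans (isT : 1 <= 2) H).
  have := d3 2 H.
  clear; move=> e2 e1 e0; lia.
rewrite A3 in d1 d2; clear d3.
have A4 : 0 < SG (6 * k.+1 + 1) by lia.
have A5 := (L1 (opt1 k.+1)).2 A4.
have [f1 [f2 f3]] := L3 (opt0 k).
rewrite (_ : 6 * k.+1 = 6 * k.+1 + 0) in f1 f2 f3 A5; last lia.
rewrite A5 in f2.
have [j [Ej|Ej]] : exists j, k.+1 = 2 * j \/ k.+1 = 2 * j + 1.
  exists (k.+1 %/ 2); lia.
- rewrite (_ : 3 * k.+1 + 1 = 6 * j + 1) in d2; last lia.
  rewrite (_ : 3 * k.+1 = 6 * j) in f2; last lia.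
  have G := (L1 (opt1 j)).2.
  have : 0 < SG (6 * j + 1) by lia.
  move/G; lia.
- rewrite (_ : 3 * k.+1 + 2 = 6 * j + 5) in b2; last lia.
  rewrite (_ : 3 * k.+1 + 1 = 6 * j + 4) in d2; last lia.
  have G := (L1 (opt5 j)).2.
  have : 0 < SG (6 * j + 5) by lia.
  move/G; lia.
Qed.
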